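(* Let $T=(V,E,w)$ be a tree with an up-monotonic and rounded cost function, rooted at the vertex $r$ witnessing up-monotonicity, and let $f_{opt}$ be an optimal structured extended strategy function for $T$ (i.e., minimizing $\sup\bigcup_{u}f(u)$ among structured extended strategy functions). Let $L$ be a layer component, and let $L_1,\dots,L_k$ be the layer components directly below $L$, with $v_j=\mathrm{root}(L_j)$. Define $f'$ by $f'(u)=f_{opt}(u)$ if $u$ is a proper descendant of some $v_j$, and $f'(u)=f_{opt}(u)+w(L)$ for all other vertices $u$ (including the $v_j$ and all vertices of $L$). Then $f'$ is a structured extended strategy function for $T$.
   Context: $w$ is up-monotonic with respect to $r$: $w(u)\le w(v)$ whenever $v$ lies on the path from $r$ to $u$; rounded: every $w(u)$ is $2^j$ with $j$ a nonnegative integer. $T_u$ denotes the subtree of $u$ and its descendants. A layer is the set of all vertices of a given cost; a layer component is a connected component of the subgraph induced by a layer; $\mathrm{root}(L)$ is the vertex of $L$ closest to $r$; $w(L)$ is the common cost of its vertices; $L'$ is directly below $L$ if the parent of $\mathrm{root}(L')$ lies in $L$. Intervals are $[a,b)$ with integers $0\le a<b$, $|[a,b)|=b-a$; $[a,b)>[a',b')$ iff $a\ge b'$; $[a,b)+c=[a+c,b+c)$. An extended strategy function for $T$ is a map $f$ assigning to each vertex $u$ an interval $f(u)$ with $|f(u)|\ge w(u)$, such that for any distinct $v_1,v_2$ with $f(v_1)\cap f(v_2)\ne\emptyset$, the path between $v_1$ and $v_2$ contains a vertex $v_3$ with $f(v_3)>f(v_1)$ and $f(v_3)>f(v_2)$.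 It is structured if for every layer component $L$, with $u=\mathrm{root}(L)$, $f(u)>f(x)$ for every $x\in V(T_u)\setminus\{u\}$. *)

(* Defs.v *)
From mathcomp Require Import all_boot.
Set Implicit Arguments. Unset Strict Implicit. Unset Printing Implicit Defensive.

Section Defs.
Variables (V : finType) (e : rel V).

Definition spath (x : V) (p : seq V) (y : V) : Prop :=
  [/\ path e x p, last x p = y & uniq (x :: p)].

(* z lies on the (in a tree: unique) path between x and y *)
Definition on_path (x y z : V) : Prop :=
  exists p, spath x p y /\ z \in x :: p.

Definition is_tree : Prop :=
  [/\ symmetric e, irreflexive e,
      (forall x y, connect e x y) &
      (forall x p, path e x p -> uniq (x :: p) -> 2 <= size p ->
                   ~~ e (last x p) x)].

Variables (r : V) (w : V -> nat).

Definition up_monotonic : Prop :=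
  forall u v, on_path r u v -> w u <= w v.

Definition rounded : Prop := forall u, exists j, w u = 2 ^ j.

(* v is in T_u, i.e. u lies on the path from r to v *)
Definition in_subtree (u v : V) : Prop := on_path r v u.
Definition proper_desc (u v : V) : Prop := in_subtree u v /\ v <> u.

Definition parent (p u : V) : Prop := e p u /\ on_path r u p.

Definition layer_rel (c : nat) : rel V :=
  [rel a b | [&& e a b, w a == c & w b == c]].
Definition layer_comp (L : {set V}) : Prop :=
  exists2 x, x \in L & L = [set y | connect (layer_rel (w x)) x y].

Definition dist_le (x y x' y' : V) : Prop :=
  forall p q, spath x p y -> spath x' q y' -> size p <= size q.

Definition is_root (L : {set V}) (u : V) : Prop :=
  u \in L /\ forall x, x \in L -> dist_le r u r x.

Definition layer_cost (L : {set V}) : nat :=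
  if [pick x in L] is Some x then w x else 0.

Definition directly_below (L L' : {set V}) : Prop :=
  exists u p, is_root L' u /\ parent p u /\ p \in L.

(* intervals [a,b) as pairs (a,b) *)
Definition ilen (I : nat * nat) : nat := I.2 - I.1.
Definition imeet (I J : nat * nat) : bool := maxn I.1 J.1 < minn I.2 J.2.
Definition igt (I J : nat * nat) : bool := J.2 <= I.1.
Definition ishift (I : nat * nat) (c : nat) : nat * nat := (I.1 + c, I.2 + c).

Definition ext_strategy (f : V -> nat * nat) : Prop :=
  (forall u, (f u).1 < (f u).2 /\ w u <= ilen (f u)) /\
  (forall v1 v2, v1 <> v2 -> imeet (f v1) (f v2) ->
     exists v3, on_path v1 v2 v3 /\ igt (f v3) (f v1) /\ igt (f v3) (f v2)).

Definition structured (f : V -> nat * nat) : Prop :=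
  ext_strategy f /\
  forall L u, layer_comp L -> is_root L u ->
    forall x, in_subtree u x -> x <> u -> igt (f u) (f x).

(* sup of the union of all intervals *)
Definition scost (f : V -> nat * nat) : nat := \max_(u : V) (f u).2.

Definition optimal_structured (f : V -> nat * nat) : Prop :=
  structured f /\ forall g, structured g -> scost f <= scost g.

End Defs.

(* Main.v *)
Require Import Defs.
From mathcomp Require Import all_boot zify.
From Stdlib Require Import Classical.
Set Implicit Arguments. Unset Strict Implicit. Unset Printing Implicit Defensive.


Lemma A1 (I J : nat * nat) : I.1 < I.2 -> J.1 < J.2 -> ~~ imeet I J -> igt I J \/ igt J I.
Proof. case: I J => a b [a' b']; rewrite /imeet /igt /= => H1 H2 H3.
case: (leqP b' a) => H4; [by left|right]. move: H3; apply: contraR => H5; lia. Qed.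
Lemma A2 (I J : nat * nat) c : imeet (ishift I c) (ishift J c) = imeet I J.
Proof. case: I J => a b [a' b']; rewrite /imeet /ishift /=.
by rewrite -addn_maxl -addn_minl ltn_add2r. Qed.
Lemma A3 (I J : nat * nat) c : igt (ishift I c) (ishift J c) = igt I J.
Proof. case: I J => a b [a' b']; by rewrite /igt /ishift /= leq_add2r. Qed.
Lemma A4 (I J : nat * nat) c : igt J I -> igt (ishift J c) I.
Proof. case: I J => a b [a' b']; rewrite /igt /ishift /= => H; exact: leq_trans H (leq_addr _ _). Qed.
Lemma A5 (A B C : nat * nat) : igt A B -> B.1 < B.2 -> igt B C -> igt A C.
Proof. case: A B C => a b [a' b'] [a'' b'']; rewrite /igt /= => H1 H2 H3; lia. Qed.
Lemma A6 (I J : nat * nat) : igt J I -> ~~ imeet I J.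
Proof. case: I J => a b [a' b']; rewrite /igt /imeet /= => H; lia. Qed.
Lemma imeetC (I J : nat * nat) : imeet I J = imeet J I.
Proof. by rewrite /imeet maxnC minnC. Qed.

Section Tree.
Variables (V : finType) (e : rel V).
Hypothesis sym_e : symmetric e.
Hypothesis econn : forall x y, connect e x y.
Hypothesis eacyc : forall x p, path e x p -> uniq (x :: p) -> 2 <= size p -> ~~ e (last x p) x.

Lemma rev_walk (x : V) (p : seq V) : path e x p -> path e (last x p) (rev (belast x p)).
Proof.
rewrite rev_path; apply: sub_path => a b /=; by rewrite sym_e.
Qed.

Lemma mem_revb (x : V) (p : seq V) z : (z \in last x p :: rev (belast x p)) = (z \in x :: p).
Proof. by rewrite -rev_rcons -lastI mem_rev. Qed.

Lemma uniq_revb (x : V) (p : seq V) : uniq (last x p :: rev (belast x p)) = uniq (x :: p).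
Proof. by rewrite -rev_rcons -lastI rev_uniq. Qed.

Lemma last_revb (x : V) (p : seq V) y : last y (rev (belast x p)) = if p is [::] then y else x.
Proof. by case: p => [|a p] //=; rewrite rev_cons last_rcons. Qed.

Lemma spath_rev (x : V) (p : seq V) y : spath e x p y -> spath e y (rev (belast x p)) x.
Proof.
case=> Hp Hl Hu; split.
- by rewrite -Hl; apply: rev_walk.
- by rewrite last_revb; case: p Hl {Hp Hu} => //= ->.
- by rewrite -Hl uniq_revb.
Qed.

Lemma spath_revP (x : V) (p : seq V) y : spath e x p y ->
  exists q, spath e y q x /\ forall z, (z \in y :: q) = (z \in x :: p).
Proof.
move=> H; exists (rev (belast x p)); split; first exact: spath_rev.
by case: H => _ Hl _ z; rewrite -Hl mem_revb.
Qed.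

Lemma spath_exists (x y : V) : exists p, spath e x p y.
Proof.
have /connectP [p Hp ->] := econn x y.
case/shortenP: Hp => p1 Hp1 Hu _; by exists p1; split.
Qed.

Lemma spath_split (x : V) p y z : spath e x p y -> z \in x :: p ->
  exists p1 p2, [/\ p = p1 ++ p2, spath e x p1 z & spath e z p2 y].
Proof.
case=> Hp Hl Hu Hz; move: Hp Hl Hu; case/splitPl: Hz => p1 p2 Hz.
rewrite cat_path last_cat Hz -cat_cons cat_uniq => /andP[H1 H2] Hl /and3P[U1 U3 U2].
exists p1, p2; split => //; split => //.
rewrite /= U2 andbT; apply/negP => Hz2.
have Hz1 : z \in x :: p1 by rewrite -Hz mem_last.
by move/hasP: U3; apply; exists z.
Qed.

Lemma spath_uniq_aux n : forall (x : V) p q, size p + size q < n ->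
  path e x p -> uniq (x :: p) -> path e x q -> uniq (x :: q) ->
  last x p = last x q -> p = q.
Proof.
elim: n => // n IH x p q Hs Hp Up Hq Uq Hl.
case: p Hs Hp Up Hl => [|a p'] Hs Hp Up Hl.
  case: q Hs Hq Uq Hl => [|b q'] //= Hs Hq /andP[Hx _] Hl.
  by move: Hx; rewrite Hl mem_last.
case: q Hs Hq Uq Hl => [|b q'] Hs Hq Uq Hl.
  by move: Up => /= /andP[Hx _]; move: Hx; have := mem_last a p'; rewrite /= in Hl; rewrite Hl => ->.
case: (eqVneq a b) => [Eab|Nab].
  subst b; congr (_ :: _); apply: (IH a) => //.
  - by move: Hs => /=; rewrite addnS addSn; lia.
  - by case/andP: Hp.
  - by case/andP: Up.
  - by case/andP: Hq.
  - by case/andP: Uq.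
set p := a :: p'; set q := b :: q'.
set y := last x p.
have Hyp : y \in p by rewrite /y /p /= mem_last.
have Hyq : y \in q by rewrite /y Hl /q /= mem_last.
case: (boolP (has (fun z => (z \in q) && (z != y)) p)).
  case/hasP => z Hzp /andP[Hzq Hzy].
  have Hzp' : z \in x :: p by rewrite in_cons Hzp orbT.
  have Hzq' : z \in x :: q by rewrite in_cons Hzq orbT.
  have [p1 [p2 [Ep Sp1 Sp2]]] := spath_split (And3 Hp (erefl y) Up) Hzp'.
  have [q1 [q2 [Eq Sq1 Sq2]]] := spath_split (And3 Hq (esym Hl) Uq) Hzq'.
  have Np2 : size p2 > 0.
    case: p2 Ep Sp2 {Sp1} => //= _ [_ Hz _]; rewrite /= in Hz; by move: Hzy; rewrite Hz eqxx.
  have Nq2 : size q2 > 0.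
    case: q2 Eq Sq2 {Sq1} => //= _ [_ Hz _]; rewrite /= in Hz; by move: Hzy; rewrite Hz eqxx.
  case: Sp1 Sq1 => [P1 L1 U1] [Q1 LQ1 UQ1].
  have E1 : p1 = q1.
    apply: (IH x) => //; last by rewrite L1 LQ1.
    move: Hs Np2 Nq2; rewrite Ep Eq !size_cat; move: (size p1) (size p2) (size q1) (size q2) => s1 s2 s3 s4.
    clear; lia.
  case: p1 Ep E1 L1 {P1 U1} => [|a1 p1] Ep E1 L1.
    move: Up => /= /andP[Hx _]; rewrite /= in L1; by move: Hx; rewrite L1 -/p Hzp.
  move: Ep Eq; rewrite -E1 /= => -[Ea _] [Eb _]; by move: Nab; rewrite Ea Eb eqxx.
move=> Hdis.
have Ub : uniq (b :: q') := proj2 (andP Uq).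
have := Ub; rewrite lastI rcons_uniq => /andP[Hyb Ubl].
have Ey : y = last b q' by rewrite /y Hl.
set c := p ++ rev (belast b q').
have Pc : path e x c.
  rewrite cat_path Hp /=; move: (Hl) => /= ->; apply: rev_walk; by case/andP: Hq.
have Uc : uniq (x :: c).
  rewrite -cat_cons cat_uniq Up rev_uniq Ubl andbT.
  apply/hasP => -[z]; rewrite mem_rev => Hzb Hzx.
  have Hzq : z \in b :: q' := mem_belast Hzb.
  move: Hzx; rewrite in_cons => /orP[/eqP Ezx|Hzp].
    by move: Uq; rewrite /= -Ezx Hzq.
  move/negP: Hdis; apply; apply/hasP; exists z => //.
  rewrite Hzq /=; apply/eqP => Ezy; by move: Hyb; rewrite -Ey -Ezy Hzb.
have Sc : 2 <= size c.
  rewrite /c size_cat size_rev size_belast /p [size (_ :: _)]/= addSn ltnS.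
  case Eq' : q' => [|b' q'']; last by rewrite addnC.
  case Ep' : p' => [|a' p'']; last by [].
  by move: Nab Hl; rewrite Ep' Eq' /= => /eqP.
have Lc : last x c = b.
  rewrite /c last_cat last_revb; case Eq' : q' => [|b' q''] //.
  by move: Hl; rewrite Eq' /=.
have := eacyc Pc Uc Sc; rewrite Lc sym_e; by case/andP: Hq => ->.
Qed.

Lemma spath_uniq (x y : V) p q : spath e x p y -> spath e x q y -> p = q.
Proof.
case=> Hp Hl Up [Hq Hl' Uq]; apply: (@spath_uniq_aux (size p + size q).+1 x) => //.
by rewrite Hl Hl'.
Qed.

Lemma on_path_spath (x y z : V) p : on_path e x y z -> spath e x p y -> z \in x :: p.
Proof. by case=> q [Sq Hz] Sp; rewrite (spath_uniq Sp Sq). Qed.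

Lemma walk_hits (x y z : V) p : on_path e x y z -> path e x p -> last x p = y -> z \in x :: p.
Proof.
move=> Ho Hp Hl; case/shortenP: Hp Hl => p' Hp' Hu Hsub Hl.
have := on_path_spath Ho (And3 Hp' Hl Hu).
by rewrite !in_cons => /orP[->//|/Hsub ->]; rewrite orbT.
Qed.

Lemma on_path_sym (x y z : V) : on_path e x y z -> on_path e y x z.
Proof.
case=> p [Sp Hz]; have [q [Sq Hq]] := spath_revP Sp.
by exists q; split => //; rewrite Hq.
Qed.

Lemma on_path_trans (x y z v : V) : on_path e x y z -> on_path e z y v -> on_path e x y v.
Proof.
case=> p [Sp Hz] Hv.
have [p1 [p2 [Ep S1 S2]]] := spath_split Sp Hz.
exists p; split => //; have := on_path_spath Hv S2.
rewrite Ep -cat_cons mem_cat in_cons => /orP[/eqP->|->]; last by rewrite orbT.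
by case: S1 => _ <- _; rewrite mem_last.
Qed.

Lemma on_path_end (x y : V) : on_path e x y y.
Proof.
have [p Sp] := spath_exists x y; exists p; split => //.
by case: Sp => _ <- _; rewrite mem_last.
Qed.

Lemma walk2 (r a b v : V) Q S : on_path e r b v -> spath e r Q a -> spath e a S b ->
  (v \in r :: Q) || (v \in S).
Proof.
move=> Ho [PQ LQ UQ] [PS LS US].
have := walk_hits Ho (_ : path e r (Q ++ S)) (_ : last r (Q ++ S) = b).
rewrite -cat_cons mem_cat; apply.
- by rewrite cat_path PQ LQ.
- by rewrite last_cat LQ.
Qed.

Variable r : V.
Notation pd := (proper_desc e r).

Lemma pd_trans (u v x : V) : pd u x -> pd v u -> pd v x.
Proof.
case=> [[P [SP Hu]] Nxu] [Hv Nuv].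
have [P1 [P2 [EP S1 S2]]] := spath_split SP Hu.
have Hv1 := on_path_spath Hv S1.
split.
  exists P; split => //; by rewrite EP -cat_cons mem_cat Hv1.
move=> Exv; subst v.
case: S2 => _ L2 _.
have Hx2 : x \in P2.
  case: P2 EP L2 => [|a P2] EP L2; first by case: Nxu; rewrite -L2.
  have := mem_last a P2; rewrite /= in L2; rewrite L2 in_cons => /orP[/eqP Exa|->]; last by rewrite orbT.
  by rewrite Exa eqxx.
case: SP => _ _; rewrite EP -cat_cons cat_uniq => /and3P[_ /hasP H _].
by apply: H; exists x.
Qed.

Lemma pd_size (u v : V) P : pd v u -> spath e r P u ->
  exists P1, spath e r P1 v /\ size P1 < size P.
Proof.
case=> Hv Nuv SP.
have [P1 [P2 [EP S1 S2]]] := spath_split SP (on_path_spath Hv SP).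
exists P1; split => //; rewrite EP size_cat.
case: P2 {EP} S2 => [|a P2] [_ L2 _]; first by case: Nuv.
by rewrite /= addnS ltnS leq_addr.
Qed.

Lemma pd_cross (v v1 v2 : V) : pd v v1 -> ~ pd v v2 -> on_path e v1 v2 v.
Proof.
move=> [Hv1 N1] N2.
case: (eqVneq v2 v) => [->|N2v]; first exact: on_path_end.
have [Q SQ] := spath_exists r v2.
have HQ : v \notin r :: Q.
  apply/negP => H; apply: N2; split; last by apply/eqP.
  by exists Q.
have [R SR] := spath_exists v1 v2.
exists R; split => //; apply/negPn/negP => HR.
have [R' [SR' ER']] := spath_revP SR.
have := walk2 Hv1 SQ SR'.
rewrite (negbTE HQ) /= => H; move/negP: HR; apply.
by rewrite -ER' in_cons H orbT.
Qed.

Lemma pd_avoid (v v1 v2 v3 : V) : ~ pd v v1 -> ~ pd v v2 -> on_path e v1 v2 v3 -> ~ pd v v3.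
Proof.
move=> N1 N2 [R [SR H3]] [Hv N3].
have [R1 [R2 [ER S1 S2]]] := spath_split SR H3.
have U : uniq (v1 :: R1 ++ R2) by rewrite -ER; case: SR.
case: (boolP (v \in v1 :: R1)) => Hv1.
- have Hv2 : v \notin R2.
    apply/negP => H; move: U; rewrite -cat_cons cat_uniq => /and3P[_ /hasP Hh _].
    by apply: Hh; exists v.
  have Nv2 : v2 <> v.
    move=> E; subst v2; case: S2 => _ L2 _.
    case: R2 ER U Hv2 L2 => [|a R2] ER U Hv2 L2; first by apply: N3; rewrite -L2.
    by have := mem_last a R2; rewrite /= in L2; rewrite L2 (negbTE Hv2).
  have [Q SQ] := spath_exists r v2.
  have HQ : v \notin r :: Q.
    apply/negP => H; apply: N2; split => //; by exists Q.
  have [R2' [SR2' ER2]] := spath_revP S2.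
  have := walk2 (on_path_sym (on_path_sym Hv)) SQ SR2'.
  rewrite (negbTE HQ) /= => H.
  have : v \in v3 :: R2 by rewrite -ER2 in_cons H orbT.
  rewrite in_cons (negbTE Hv2) orbF => /eqP E; apply: N3; by rewrite E.
- have Nv1 : v1 <> v by move=> E; move: Hv1; rewrite E in_cons eqxx.
  have [Q SQ] := spath_exists r v1.
  have HQ : v \notin r :: Q.
    apply/negP => H; apply: N1; split => //; by exists Q.
  have := walk2 Hv SQ S1.
  rewrite (negbTE HQ) /= => H; move: Hv1; by rewrite in_cons H orbT.
Qed.

Variables (w : V -> nat) (fopt f' : V -> nat * nat) (L : {set V}) (c : nat).
Definition Wit (u x : V) := exists L', layer_comp e w L' /\ directly_below e r L L' /\
                   is_root e r L' u /\ pd u x.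
Definition Dset (x : V) := exists u, Wit u x.
Hypothesis Hstr : structured e r w fopt.
Hypothesis Hf1 : forall u, Dset u -> f' u = fopt u.
Hypothesis Hf2 : forall u, ~ Dset u -> f' u = ishift (fopt u) c.

Lemma Dset_E u : Dset u <-> (exists L' v, layer_comp e w L' /\ directly_below e r L L' /\
                   is_root e r L' v /\ pd v u).
Proof. split; [case=> v [L' H]; by exists L', v | case=> L' [v H]; by exists v, L']. Qed.

Lemma min_wit n : forall u P v1, spath e r P u -> size P < n -> Wit u v1 ->
  exists v, Wit v v1 /\ ~ Dset v.
Proof.
elim: n => // n IH u P v1 SP Hs Hw.
case: (classic (Dset u)) => Hu; last by exists u.
case: Hu => v [L' [HL [Hd [Hr Hp]]]].
have [P1 [SP1 Hs1]] := pd_size Hp SP.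
apply: (IH v P1) => //; first exact: leq_trans Hs1 _.
case: Hw => L'' [_ [_ [_ Hp2]]].
exists L'; split => //; split => //; split => //; exact: pd_trans Hp2 Hp.
Qed.

Lemma D_avoid v1 v2 v3 : ~ Dset v1 -> ~ Dset v2 -> on_path e v1 v2 v3 -> ~ Dset v3.
Proof.
move=> N1 N2 H3 [v [L' [HL [Hd [Hr Hp]]]]].
apply: (pd_avoid (v := v) _ _ H3 Hp).
- move=> Hp1; apply: N1; exists v, L'; by split; [|split; [|split]].
- move=> Hp2; apply: N2; exists v, L'; by split; [|split; [|split]].
Qed.

Lemma cross v1 v2 : Dset v1 -> ~ Dset v2 -> imeet (f' v1) (f' v2) ->
  exists v3, on_path e v1 v2 v3 /\ igt (f' v3) (f' v1) /\ igt (f' v3) (f' v2).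
Proof.
move=> D1 N2 Hm.
case: Hstr => [[Hlen Hsep] Hroot].
have [vj [Wj Nj]] : exists v, Wit v v1 /\ ~ Dset v.
  case: D1 => u Wu.
  have [P SP] := spath_exists r u.
  exact: (@min_wit (size P).+1 u P v1 SP (ltnSn _) Wu).
case: (Wj) => Lj [HLj [Hdj [Hrj Hpj]]].
have Gj : igt (fopt vj) (fopt v1).
  case: Hpj => Hs Hne; exact: Hroot Lj vj HLj Hrj v1 Hs Hne.
have Npj : ~ pd vj v2.
  move=> Hp2; apply: N2; exists vj, Lj; by split; [|split; [|split]].
have Onj : on_path e v1 v2 vj := pd_cross Hpj Npj.
rewrite (Hf1 D1) (Hf2 N2) in Hm *.
have Pj := (Hlen vj).1.
case: (eqVneq v2 vj) => [Ev|Nv].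
  subst v2. by move: Hm; rewrite (negbTE (A6 (A4 c Gj))).
case: (boolP (imeet (fopt vj) (fopt v2))) => Hm2.
  have [v3 [O3 [G31 G32]]] := Hsep vj v2 (fun E => (negP Nv) (introT eqP (Logic.eq_sym E))) Hm2.
  have N3 : ~ Dset v3 := D_avoid Nj N2 O3.
  exists v3; rewrite (Hf2 N3); split; first exact: on_path_trans Onj O3.
  split; last by rewrite A3.
  apply: A4; exact: A5 G31 Pj Gj.
have [G|G] := A1 Pj (Hlen v2).1 Hm2.
  by exists vj; rewrite (Hf2 Nj); split => //; split; [apply: A4|rewrite A3].
have G21 : igt (fopt v2) (fopt v1) := A5 G Pj Gj.
by move: Hm; rewrite (negbTE (A6 (A4 c G21))).
Qed.

Lemma ge_f' u : igt (fopt u) (fopt u) -> True. Proof. done. Qed.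

Lemma igt_f' u x : igt (fopt u) x -> igt (f' u) x.
Proof.
case: (classic (Dset u)) => Hu; [by rewrite Hf1|rewrite Hf2 //; exact: A4].
Qed.

Lemma main_aux : structured e r w f'.
Proof.
case: (Hstr) => [[Hlen Hsep] Hroot].
split; first split.
- move=> u; case: (classic (Dset u)) => Hu; first by rewrite Hf1.
  rewrite Hf2 //; case: (Hlen u); case: (fopt u) => a b /=; rewrite /ilen /=.
  move=> H1 H2; rewrite ltn_add2r subnDr; by split.
- move=> v1 v2 N12 Hm.
  case: (classic (Dset v1)) => D1; case: (classic (Dset v2)) => D2.
  + rewrite !Hf1 // in Hm *.
    have [v3 [O3 [G1 G2]]] := Hsep v1 v2 N12 Hm.
    by exists v3; split => //; split; apply: igt_f'.
  + exact: cross.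
  + rewrite imeetC in Hm; have [v3 [O3 [G1 G2]]] := cross D2 D1 Hm.
    by exists v3; split; [exact: on_path_sym|split].
  + rewrite !Hf2 // A2 in Hm *.
    have [v3 [O3 [G1 G2]]] := Hsep v1 v2 N12 Hm.
    exists v3; rewrite Hf2; last exact: D_avoid D1 D2 O3.
    by split => //; rewrite !A3.
- move=> L' u HL Hr x Hx Nx.
  have Gux := Hroot L' u HL Hr x Hx Nx.
  case: (classic (Dset u)) => Du.
    have Dx : Dset x.
      case: Du => v [L'' [H1 [H2 [H3 H4]]]]; exists v, L''; split; [|split; [|split]] => //.
      exact: pd_trans (conj Hx Nx) H4.
    by rewrite !Hf1.
  rewrite (Hf2 Du); case: (classic (Dset x)) => Dx; first by rewrite Hf1 //; apply: A4.
  by rewrite Hf2 // A3.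
Qed.
End Tree.

Theorem mainTheorem18 (V : finType) (e : rel V) (r : V) (w : V -> nat)
    (fopt : V -> nat * nat) (L : {set V}) (f' : V -> nat * nat) :
  is_tree e -> up_monotonic e r w -> rounded w ->
  optimal_structured e r w fopt ->
  layer_comp e w L ->
  (forall u,
     (exists L' v, layer_comp e w L' /\ directly_below e r L L' /\
                   is_root e r L' v /\ proper_desc e r v u) ->
     f' u = fopt u) ->
  (forall u,
     ~ (exists L' v, layer_comp e w L' /\ directly_below e r L L' /\
                     is_root e r L' v /\ proper_desc e r v u) ->
     f' u = ishift (fopt u) (layer_cost w L)) ->
  structured e r w f'.
Proof.
move=> [Hs _ Hc Ha] _ _ [Hstr _] _ H1 H2.
apply: (@main_aux V e Hs Hc Ha r w fopt f' L (layer_cost w L) Hstr).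
- by move=> u /Dset_E; apply: H1.
- by move=> u Hu; apply: H2 => /Dset_E.
Qed.
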